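(* Let $\Theta$ be a family of portfolio maps $\pi:\Delta_n\to\overline{\Delta}_n$ which is totally bounded with respect to the supremum metric $\|\pi-\eta\|_\infty=\sup_{p\in\Delta_n}|\pi(p)-\eta(p)|$ (Euclidean norm $|\cdot|$), and equip $\Theta$ with the topology of uniform convergence. Suppose that for every $\pi\in\Theta$ the asymptotic growth rate $W(\pi)=\lim_{t\to\infty}\frac1t\log V_\pi(t)$ exists, and that the initial distribution $\nu_0$ (a Borel probability measure on $\Theta$) has full support on $\Theta$. Then the sequence $\{\nu_t\}_{t\ge0}$ of wealth distributions satisfies the large deviation principle on $\Theta$ with rate function $I(\pi)=W^*-W(\pi)$, where $W^*=\sup_{\pi\in\Theta}W(\pi)$.
   Context: Fix $n\ge2$. Let $\Delta_n=\{p\in(0,1)^n:\sum_i p_i=1\}$ be the open unit simplex and $\overline{\Delta}_n=\{p\in[0,1]^n:\sum_i p_i=1\}$ the closed one. The market is an arbitrary deterministic sequence $\{\mu(t)\}_{t\ge0}\subset\Delta_n$ (market weights) such that there is a constant $M>0$ with $\frac1M\le \mu_i(t+1)/\mu_i(t)\le M$ for all $1\le i\le n$, $t\ge0$. A portfolio map is a map $\pi:\Delta_n\to\overline{\Delta}_n$; its relative value is defined by $V_\pi(0)=1$ and $V_\pi(t+1)=V_\pi(t)\sum_{i=1}^n\pi_i(\mu(t))\frac{\mu_i(t+1)}{\mu_i(t)}$. For a family $\Theta$ of portfolio maps (with $(p,\pi)\mapsto\pi(p)$ jointly measurable) and a Borel probability measure $\nu_0$ on $\Theta$ (the initial distribution),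 set $\widehat V(t)=\int_\Theta V_\pi(t)\,d\nu_0(\pi)$; the wealth distribution at time $t$ is the Borel probability measure $\nu_t(B)=\frac{1}{\widehat V(t)}\int_B V_\pi(t)\,d\nu_0(\pi)$. The support of $\nu_0$ is the smallest closed set of full measure; full support means the support is $\Theta$. Large deviation principle with lower-semicontinuous rate $I:\Theta\to[0,\infty]$: for every closed $F\subset\Theta$, $\limsup_{t\to\infty}\frac1t\log\nu_t(F)\le-\inf_{F}I$, and for every open $G\subset\Theta$, $\liminf_{t\to\infty}\frac1t\log\nu_t(G)\ge-\inf_G I$. *)

(* Defs.v *)
From HB Require Import structures.
From mathcomp Require Import all_boot all_order all_algebra.
From mathcomp Require Import all_classical all_reals all_analysis.
From Stdlib Require List.
Set Implicit Arguments. Unset Strict Implicit. Unset Printing Implicit Defensive.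
Import Order.TTheory GRing.Theory Num.Theory.
Local Open Scope classical_set_scope.
Local Open Scope ring_scope.

Section Defs.
Variables (R : realType) (n : nat).

Definition open_simplex : set ('I_n -> R) :=
  [set p | (forall i, 0 < p i < 1) /\ \sum_(i < n) p i = 1].
Definition closed_simplex : set ('I_n -> R) :=
  [set p | (forall i, 0 <= p i <= 1) /\ \sum_(i < n) p i = 1].

Definition eucl_dist (x y : 'I_n -> R) : R :=
  Num.sqrt (\sum_(i < n) (x i - y i) ^+ 2).

Definition is_market (mu : nat -> 'I_n -> R) : Prop :=
  (forall t, open_simplex (mu t)) /\
  exists M : R, 0 < M /\ forall i t,
    M^-1 <= mu t.+1 i / mu t i <= M.

(* portfolio map Delta_n -> closed simplex (values off Delta_n are irrelevant) *)
Definition portfolio_map (f : ('I_n -> R) -> ('I_n -> R)) : Prop :=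
  forall p, open_simplex p -> closed_simplex (f p).

Fixpoint relval (mu : nat -> 'I_n -> R) (f : ('I_n -> R) -> ('I_n -> R))
    (t : nat) : R :=
  match t with
  | 0%N => 1
  | t'.+1 => relval mu f t' *
             \sum_(i < n) f (mu t') i * (mu t'.+1 i / mu t' i)
  end.

Variables (P : Type) (pi : P -> ('I_n -> R) -> ('I_n -> R)).

Definition udist (a b : P) : R :=
  sup [set eucl_dist (pi a p) (pi b p) | p in open_simplex].

Definition utotally_bounded : Prop :=
  forall e : R, 0 < e -> exists s : seq P,
    forall a, exists2 b, Stdlib.Lists.List.In b s & udist a b < e.

Definition uopen (G : set P) : Prop :=
  forall a, G a -> exists2 e : R, 0 < e & forall b, udist a b < e -> G b.
Definition uclosed (F : set P) : Prop := uopen (~` F).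

Definition ulsc (I : P -> R) : Prop :=
  forall a (c : R), c < I a ->
    exists2 e : R, 0 < e & forall b, udist a b < e -> c < I b.

End Defs.

Section Wealth.
Local Open Scope ereal_scope.
Variables (R : realType) (n : nat) (d : measure_display) (P : measurableType d).
Variables (mu : nat -> 'I_n -> R) (pi : P -> ('I_n -> R) -> ('I_n -> R))
  (nu0 : probability P R).

Definition full_support : Prop :=
  forall F : set P, uclosed pi F -> nu0 F = 1 -> F = setT.

Definition wealth_dist (t : nat) (B : set P) : R :=
  (fine (\int[nu0]_(x in B) (relval mu (pi x) t)%:E) /
   fine (\int[nu0]_(x in setT) (relval mu (pi x) t)%:E))%R.

Definition eln (x : R) : \bar R := if (0 < x)%R then (ln x)%:E else -oo.

Definition LDP (nu : nat -> set P -> R) (I : P -> R) : Prop :=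
  ulsc pi I /\
  (forall F, uclosed pi F ->
     limn_esup (fun t => eln (nu t F) * (t%:R^-1)%:E) <=
       - ereal_inf [set (I a)%:E | a in F]) /\
  (forall G, uopen pi G ->
     - ereal_inf [set (I a)%:E | a in G] <=
       limn_einf (fun t => eln (nu t G) * (t%:R^-1)%:E)).

End Wealth.

(* Main.v *)
Require Import Defs.
From HB Require Import structures.
From mathcomp Require Import all_boot all_order all_algebra.
From mathcomp Require Import all_classical all_reals all_analysis.
From mathcomp Require Import ring lra.
From mathcomp Require Import measurable_realfun.
Set Implicit Arguments. Unset Strict Implicit.
Import Order.TTheory GRing.Theory Num.Theory numFieldNormedType.Exports.
Local Open Scope classical_set_scope.
Local Open Scope ring_scope.


Section Eucl.
Variables (R : realType) (n : nat).
Implicit Types x y z : 'I_n -> R.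

Lemma eucl_ge0 x y : 0 <= eucl_dist x y.
Proof. exact: sqrtr_ge0. Qed.

Lemma eucl_sym x y : eucl_dist x y = eucl_dist y x.
Proof. by rewrite /eucl_dist; congr Num.sqrt; apply: eq_bigr => i _; rewrite -sqrrN opprB. Qed.

Lemma eucl_coord x y i : `|x i - y i| <= eucl_dist x y.
Proof.
rewrite /eucl_dist -sqrtr_sqr ler_sqrt; last by apply: sumr_ge0 => j _; exact: sqr_ge0.
by rewrite (bigD1 i) //= lerDl; apply: sumr_ge0 => j _; exact: sqr_ge0.
Qed.

Lemma eucl_xx x : eucl_dist x x = 0.
Proof. by rewrite /eucl_dist big1 ?sqrtr0 // => i _; rewrite subrr expr0n. Qed.

Lemma cs_sum (u v : 'I_n -> R) :
  \sum_i u i * v i <= Num.sqrt (\sum_i u i ^+ 2) * Num.sqrt (\sum_i v i ^+ 2).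
Proof.
set A := Num.sqrt _; set B := Num.sqrt _.
have hu : 0 <= \sum_i u i ^+ 2 by apply: sumr_ge0 => j _; exact: sqr_ge0.
have hv : 0 <= \sum_i v i ^+ 2 by apply: sumr_ge0 => j _; exact: sqr_ge0.
have A0 : 0 <= A by exact: sqrtr_ge0.
have B0 : 0 <= B by exact: sqrtr_ge0.
have key : 0 <= \sum_i (B * u i - A * v i) ^+ 2 by apply: sumr_ge0 => j _; exact: sqr_ge0.
have e : \sum_i (B * u i - A * v i) ^+ 2 =
   B ^+ 2 * \sum_i u i ^+ 2 - 2 * A * B * \sum_i u i * v i + A ^+ 2 * \sum_i v i ^+ 2.
  rewrite !mulr_sumr -sumrB -big_split /=; apply: eq_bigr => i _.
  by rewrite sqrrB !exprMn; ring.
rewrite e in key.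
have [AB0|ABpos] := eqVneq (A * B) 0.
  move: AB0 => /eqP; rewrite mulf_eq0 => /orP[/eqP Az|/eqP Bz].
  - have : \sum_i u i ^+ 2 = 0 by rewrite -(sqr_sqrtr hu) -/A Az expr0n.
    move/eqP; rewrite psumr_eq0 => [/allP hz|j _]; last exact: sqr_ge0.
    rewrite big1; first by rewrite mulr_ge0.
    move=> i _.
    have := hz i (mem_index_enum i); rewrite implyTb sqrf_eq0 => /eqP ->.
    by rewrite mul0r.
  - have : \sum_i v i ^+ 2 = 0 by rewrite -(sqr_sqrtr hv) -/B Bz expr0n.
    move/eqP; rewrite psumr_eq0 => [/allP hz|j _]; last exact: sqr_ge0.
    rewrite big1; first by rewrite mulr_ge0.
    move=> i _.
    have := hz i (mem_index_enum i); rewrite implyTb sqrf_eq0 => /eqP ->.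
    by rewrite mulr0.
have ABp : 0 < A * B by rewrite lt_def ABpos mulr_ge0.
have hA2 : A ^+ 2 = \sum_i u i ^+ 2 by rewrite sqr_sqrtr.
have hB2 : B ^+ 2 = \sum_i v i ^+ 2 by rewrite sqr_sqrtr.
rewrite -hA2 -hB2 in key.
have : (A * B) * (\sum_i u i * v i) <= (A * B) * (A * B).
  rewrite -subr_ge0.
  have ee : B ^+ 2 * A ^+ 2 - 2 * A * B * (\sum_i u i * v i) + A ^+ 2 * B ^+ 2
     = 2 * (A * B * (A * B) - A * B * (\sum_i u i * v i)) by ring.
  by move: key; rewrite ee pmulr_rge0.
by rewrite ler_pM2l.
Qed.

Lemma eucl_triangle x y z : eucl_dist x z <= eucl_dist x y + eucl_dist y z.
Proof.
rewrite /eucl_dist.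
set A := Num.sqrt (\sum_i (x i - y i) ^+ 2); set B := Num.sqrt (\sum_i (y i - z i) ^+ 2).
have A0 : 0 <= A by exact: sqrtr_ge0.
have B0 : 0 <= B by exact: sqrtr_ge0.
rewrite -[A + B]ger0_norm ?addr_ge0 // -sqrtr_sqr ler_sqrt; last exact: sqr_ge0.
have hu : 0 <= \sum_i (x i - y i) ^+ 2 by apply: sumr_ge0 => j _; exact: sqr_ge0.
have hv : 0 <= \sum_i (y i - z i) ^+ 2 by apply: sumr_ge0 => j _; exact: sqr_ge0.
have cs := cs_sum (fun i => x i - y i) (fun i => y i - z i).
have e : \sum_i (x i - z i) ^+ 2 = \sum_i (x i - y i) ^+ 2 + \sum_i (y i - z i) ^+ 2
     + 2 * \sum_i (x i - y i) * (y i - z i).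
  rewrite mulr_sumr -!big_split /=; apply: eq_bigr => i _; ring.
rewrite e sqrrD /A /B !sqr_sqrtr //; rewrite -/A -/B in cs |- *.
have : 2 * \sum_i (x i - y i) * (y i - z i) <= 2 * (A * B) by rewrite ler_pM2l.
lra.
Qed.

End Eucl.


Section Market.
Variables (R : realType) (n : nat) (mu : nat -> 'I_n -> R) (M : R).
Hypothesis hsimp : forall t, open_simplex (mu t).
Hypothesis hM0 : 0 < M.
Hypothesis hM : forall i t, M^-1 <= mu t.+1 i / mu t i <= M.

Definition growth (f : ('I_n -> R) -> ('I_n -> R)) (s : nat) : R :=
  \sum_(i < n) f (mu s) i * (mu s.+1 i / mu s i).

Lemma M_ge1 : 1 <= M.
Proof.
have [i _] : exists i : 'I_n, true.
  have := (hsimp 0).2; case: n mu => [|k] mu' /=.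
    by rewrite big_ord0 => /eqP; rewrite eq_sym oner_eq0.
  by move=> _; exists ord0.
have /andP[h1 h2] := hM i 0.
have h3 := le_trans h1 h2; rewrite leNgt; apply/negP => hM1.
have : 1 < M^-1 by rewrite invf_gt1.
lra.
Qed.

Lemma growth_bounds f : portfolio_map f -> forall s, M^-1 <= growth f s <= M.
Proof.
move=> hf s; have [hpos hsum] := hf _ (hsimp s).
rewrite /growth; apply/andP; split.
  have -> : M^-1 = \sum_(i < n) f (mu s) i * M^-1 by rewrite -mulr_suml hsum mul1r.
  apply: ler_sum => i _.
  by rewrite ler_wpM2l //; [case/andP: (hpos i) | case/andP: (hM i s)].
have -> : M = \sum_(i < n) f (mu s) i * M by rewrite -mulr_suml hsum mul1r.
apply: ler_sum => i _.
by rewrite ler_wpM2l //; [case/andP: (hpos i) | case/andP: (hM i s)].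
Qed.

Lemma growth_gt0 f : portfolio_map f -> forall s, 0 < growth f s.
Proof.
move=> hf s; have /andP[h _] := growth_bounds hf s.
by apply: lt_le_trans h; rewrite invr_gt0.
Qed.

Lemma relvalS f t : relval mu f t.+1 = relval mu f t * growth f t.
Proof. by []. Qed.

Lemma relval_gt0 f : portfolio_map f -> forall t, 0 < relval mu f t.
Proof.
move=> hf; elim=> [|t IH] /=; first exact: ltr01.
by rewrite mulr_gt0 // growth_gt0.
Qed.

Lemma relval_le f : portfolio_map f -> forall t, relval mu f t <= M ^+ t.
Proof.
move=> hf; elim=> [|t IH] /=; first by rewrite expr0.
rewrite exprSr; apply: ler_pM => //; first exact: ltW (relval_gt0 hf t).
  exact: ltW (growth_gt0 hf t).
by case/andP: (growth_bounds hf t).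
Qed.

Lemma ln_relvalS f t : portfolio_map f ->
  ln (relval mu f t.+1) = ln (relval mu f t) + ln (growth f t).
Proof.
move=> hf; rewrite relvalS lnM // posrE; [exact: relval_gt0|exact: growth_gt0].
Qed.

Lemma ln_relval_le f t : portfolio_map f -> ln (relval mu f t) <= t%:R * ln M.
Proof.
move=> hf; elim: t => [|t IH]; first by rewrite /= ln1 mul0r.
rewrite ln_relvalS // mulrSr mulrDl mul1r lerD //.
rewrite ler_ln ?posrE //; [by case/andP: (growth_bounds hf t)|exact: growth_gt0].
Qed.

End Market.


Lemma ln_lip (R : realType) (M x y : R) : 0 < M -> M^-1 <= x -> M^-1 <= y ->
  `|ln x - ln y| <= M * `|x - y|.
Proof.
move=> M0 hx hy.
have x0 : 0 < x by apply: lt_le_trans hx; rewrite invr_gt0.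
have y0 : 0 < y by apply: lt_le_trans hy; rewrite invr_gt0.
suff key : forall u v : R, M^-1 <= u -> M^-1 <= v -> ln u - ln v <= M * `|u - v|.
  rewrite ler_norml key // andbT lerNl opprB distrC; exact: key.
move=> u v hu hv.
have u0 : 0 < u by apply: lt_le_trans hu; rewrite invr_gt0.
have v0 : 0 < v by apply: lt_le_trans hv; rewrite invr_gt0.
rewrite -ln_div ?posrE //.
have -> : u / v = 1 + (u / v - 1) by ring.
apply: le_trans (le_ln1Dx _) _; first by have := divr_gt0 u0 v0; lra.
have -> : u / v - 1 = (u - v) / v by field; rewrite gt_eqF.
apply: le_trans (ler_norm _) _; rewrite normrM normfV (gtr0_norm v0) mulrC.
rewrite ler_wpM2r //; rewrite -[M]invrK lef_pV2 ?posrE ?invr_gt0 //.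
Qed.

Section Port.
Variables (R : realType) (n : nat) (mu : nat -> 'I_n -> R) (M : R).
Hypothesis hsimp : forall t, open_simplex (mu t).
Hypothesis hM0 : 0 < M.
Hypothesis hM : forall i t, M^-1 <= mu t.+1 i / mu t i <= M.
Variables (P : Type) (pi : P -> ('I_n -> R) -> ('I_n -> R)).
Hypothesis hpi : forall a, portfolio_map (pi a).

Let S a b := [set eucl_dist (pi a p) (pi b p) | p in @open_simplex R n].

Lemma eucl_bound a b p : open_simplex p -> eucl_dist (pi a p) (pi b p) <= Num.sqrt n%:R.
Proof.
move=> hp; rewrite /eucl_dist ler_sqrt ?ler0n //.
have [ha _] := hpi a hp; have [hb _] := hpi b hp.
rewrite -[n in n%:R]card_ord -sumr_const; apply: ler_sum => i _.
have /andP[? ?] := ha i; have /andP[? ?] := hb i.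
nra.
Qed.

Lemma S_sup a b : has_sup (S a b).
Proof.
split; first by exists (eucl_dist (pi a (mu 0)) (pi b (mu 0))); exists (mu 0).
by exists (Num.sqrt n%:R) => _ [p hp <-]; exact: eucl_bound.
Qed.

Lemma udist_ub a b p : open_simplex p -> eucl_dist (pi a p) (pi b p) <= udist pi a b.
Proof. by move=> hp; apply: sup_upper_bound (S_sup a b) _ _; exists p. Qed.

Lemma udist_ge0 a b : 0 <= udist pi a b.
Proof. exact: le_trans (eucl_ge0 _ _) (udist_ub a b (hsimp 0)). Qed.

Lemma udist_sym a b : udist pi a b = udist pi b a.
Proof.
rewrite /udist; congr sup; apply/seteqP; split => _ [p hp <-]; exists p => //;
  exact: eucl_sym.
Qed.

Lemma udist_xx a : udist pi a a = 0.
Proof.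
apply/eqP; rewrite eq_le udist_ge0 andbT.
apply: ge_sup; first by exists 0; exists (mu 0) => //; exact: eucl_xx.
by move=> _ [p hp <-]; rewrite eucl_xx.
Qed.

Lemma udist_triangle a b c : udist pi a c <= udist pi a b + udist pi b c.
Proof.
apply: ge_sup; first by exists (eucl_dist (pi a (mu 0)) (pi c (mu 0))); exists (mu 0).
move=> _ [p hp <-]; apply: le_trans (eucl_triangle _ (pi b p) _) _.
by apply: lerD; exact: udist_ub.
Qed.

Lemma coord_udist a b p i : open_simplex p -> `|pi a p i - pi b p i| <= udist pi a b.
Proof. by move=> hp; apply: le_trans (eucl_coord _ _ i) (udist_ub a b hp). Qed.

Lemma growth_lip a b s :
  `|growth mu (pi a) s - growth mu (pi b) s| <= n%:R * M * udist pi a b.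
Proof.
rewrite /growth -sumrB.
apply: le_trans (ler_norm_sum _ _ _) _.
rewrite -[n in n%:R]card_ord -sumr_const !mulr_suml; apply: ler_sum => i _.
rewrite -mulrBl normrM mul1r mulrC.
have /andP[h1 h2] := hM i s.
have r0 : 0 <= mu s.+1 i / mu s i by apply: le_trans h1; rewrite invr_ge0 ltW.
rewrite ger0_norm // ler_pM //; exact: coord_udist.
Qed.

Definition Lc := M * (n%:R * M).

Lemma Lc_ge0 : 0 <= Lc.
Proof. by rewrite /Lc !mulr_ge0 ?ler0n // ltW. Qed.

Lemma lnV_lip a b t :
  `|ln (relval mu (pi a) t) - ln (relval mu (pi b) t)| <= t%:R * Lc * udist pi a b.
Proof.
elim: t => [|t IH]; first by rewrite /= subrr normr0 !mul0r.
rewrite !(ln_relvalS hsimp hM0 hM) //.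
have -> : ln (relval mu (pi a) t) + ln (growth mu (pi a) t) -
    (ln (relval mu (pi b) t) + ln (growth mu (pi b) t)) =
    (ln (relval mu (pi a) t) - ln (relval mu (pi b) t)) +
    (ln (growth mu (pi a) t) - ln (growth mu (pi b) t)) by ring.
apply: le_trans (ler_normD _ _) _.
rewrite mulrSr !mulrDl mul1r lerD //.
have /andP[ga _] := growth_bounds hsimp hM (hpi a) t.
have /andP[gb _] := growth_bounds hsimp hM (hpi b) t.
apply: le_trans (ln_lip hM0 ga gb) _.
by rewrite /Lc -mulrA ler_wpM2l ?(ltW hM0) // growth_lip.
Qed.

Lemma V_lip t : exists2 C, 0 <= C &
  forall a b, `|relval mu (pi a) t - relval mu (pi b) t| <= C * udist pi a b.
Proof.
elim: t => [|t [C C0 IH]]; first by exists 0 => // a b; rewrite /= subrr normr0 mul0r.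
exists (M ^+ t * (n%:R * M) + C * M).
  by rewrite addr_ge0 ?mulr_ge0 ?exprn_ge0 ?ler0n ?(ltW hM0).
move=> a b; rewrite !relvalS.
have -> : relval mu (pi a) t * growth mu (pi a) t - relval mu (pi b) t * growth mu (pi b) t
  = relval mu (pi a) t * (growth mu (pi a) t - growth mu (pi b) t) +
    (relval mu (pi a) t - relval mu (pi b) t) * growth mu (pi b) t by ring.
apply: (le_trans (ler_normD _ _)); rewrite [X in _ <= X]mulrDl; apply: lerD.
  rewrite normrM -mulrA; apply: ler_pM => //.
    have hh := relval_le hsimp hM0 hM (hpi a) t. rewrite ger0_norm; first exact: hh.
    exact: ltW (relval_gt0 hsimp hM0 hM (hpi a) t).
  exact: growth_lip.
rewrite normrM mulrAC; apply: ler_pM => //.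
have /andP[_ gb] := growth_bounds hsimp hM (hpi b) t.
by rewrite ger0_norm // ltW // (growth_gt0 hsimp hM0 hM (hpi b) t).
Qed.

End Port.


Section Ereal_helpers.
Variable R : realType.
Local Open Scope ereal_scope.

Lemma le_by_reals (x s : \bar R) : (forall r : R, s < r%:E -> x <= r%:E) -> x <= s.
Proof.
move=> h; case: s h => [b| |] h.
- case: x h => [a| |] h.
  + rewrite lee_fin leNgt; apply/negP => ba.
    have := h ((a + b) / 2)%R; rewrite !lte_fin lee_fin.
    have : (b < (a + b) / 2)%R by lra.
    move=> -> /(_ isT); lra.
  + by have := h (b + 1)%R; rewrite lte_fin ltrDl ltr01 => /(_ isT).
  + by rewrite leNye.
- by rewrite leey.
- case: x h => [a| |] h.
  + by exfalso; have := h (a - 1)%R (ltNyr _); rewrite lee_fin; lra.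
  + by have := h 0%R (ltNyr _).
  + by [].
Qed.

Lemma ge_by_reals (x s : \bar R) : (forall r : R, r%:E < s -> r%:E <= x) -> s <= x.
Proof.
move=> h; rewrite -leeN2; apply: le_by_reals => r hr.
rewrite leeNl -EFinN; apply: h; by rewrite EFinN lteNl.
Qed.

Lemma gap_lt (r : R) (z : \bar R) : r%:E < z -> exists2 q : R, (r < q)%R & q%:E <= z.
Proof.
case: z => [b| |] h.
- by exists b; rewrite // -lte_fin.
- by exists (r + 1)%R; rewrite ?leey // ltrDl.
- by [].
Qed.

Lemma esup_le_ev (u : (\bar R)^nat) (r : R) :
  (exists N, forall t, (N <= t)%N -> u t <= r%:E) -> limn_esup u <= r%:E.
Proof.
move=> [N hN]; rewrite limn_esup_lim; apply: lime_le; first exact: is_cvg_esups.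
exists N => // m /= Nm; apply: ge_ereal_sup => _ [k /= mk <-].
by apply: hN; exact: leq_trans Nm mk.
Qed.

Lemma einf_ge_ev (u : (\bar R)^nat) (r : R) :
  (exists N, forall t, (N <= t)%N -> r%:E <= u t) -> r%:E <= limn_einf u.
Proof.
move=> [N hN]; rewrite limn_einf_lim; apply: lime_ge; first exact: is_cvg_einfs.
exists N => // m /= Nm; apply: le_ereal_inf_tmp => _ [k /= mk <-].
by apply: hN; exact: leq_trans Nm mk.
Qed.

End Ereal_helpers.

Lemma cvg_ev (R : realType) (f : nat -> R) (l eps : R) : f @ \oo --> l -> (0 < eps)%R ->
  exists N, forall t, (N <= t)%N -> `|l - f t| < eps.
Proof.
move=> /cvgrPdist_lt h e0; have := h _ e0.
by move=> [N _ hN]; exists N => t Nt; apply: hN.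
Qed.


Section Main.
Variables (R : realType) (n : nat) (mu : nat -> 'I_n -> R) (M : R).
Hypothesis hsimp : forall t, open_simplex (mu t).
Hypothesis hM0 : 0 < M.
Hypothesis hM : forall i t, M^-1 <= mu t.+1 i / mu t i <= M.
Variables (d : measure_display) (P : measurableType d).
Variables (pi : P -> ('I_n -> R) -> ('I_n -> R)).
Hypothesis hpi : forall a, portfolio_map (pi a).
Hypothesis htb : utotally_bounded pi.
Hypothesis hborel : @measurable d P = <<s uopen pi >>.
Variable nu0 : probability P R.
Hypothesis hsupp : full_support pi nu0.
Variable W : P -> R.
Hypothesis hW : forall a, (fun t : nat => ln (relval mu (pi a) t) / t%:R) @ \oo --> W a.

Notation V a t := (relval mu (pi a) t).
Notation ud := (udist pi).

Lemma V_gt0 a t : 0 < V a t.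
Proof. exact: (relval_gt0 hsimp hM0 hM (hpi a) t). Qed.

Lemma lnV_lip' a b t : `|ln (V a t) - ln (V b t)| <= t%:R * Lc n M * ud a b.
Proof. exact: (lnV_lip hsimp hM0 hM hpi). Qed.

Lemma ball_open a (e : R) : uopen pi [set b | ud a b < e].
Proof.
move=> b /= hb; exists (e - ud a b); first by rewrite subr_gt0.
move=> c hc /=; apply: le_lt_trans (udist_triangle hsimp hpi a b c) _.
by rewrite -ltrBrDl.
Qed.

Lemma uopen_meas (G : set P) : uopen pi G -> measurable G.
Proof. by move=> hG; rewrite hborel; apply: sub_sigma_algebra. Qed.

Lemma uclosed_meas (F : set P) : uclosed pi F -> measurable F.
Proof. by move=> /uopen_meas hF; rewrite -[F]setCK; apply: measurableC. Qed.

Lemma ucont_meas (g : P -> R) :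
  (forall a (e : R), 0 < e -> exists2 del : R, 0 < del &
     forall b, ud a b < del -> `|g a - g b| < e) ->
  measurable_fun setT g.
Proof.
move=> hg.
have hR : @measurable _ R = <<s [set A | exists x y, A = `]x, y[%classic] >>.
  exact: measurable_realfun.RGenOpens.measurableE.
apply: (measurability _ hR).
move=> _ [_ [x [y ->]] <-]; apply: uopen_meas.
move=> a [_ /=]; rewrite in_itv /= => /andP[xa ay].
have [del del0 hdel] := hg a (Num.min (g a - x) (y - g a)) ltac:(by rewrite lt_min !subr_gt0 xa ay).
exists del => // b hb; split => //=; rewrite in_itv /=.
have := hdel b hb; rewrite lt_min => /andP[h1 h2].
have : `|g a - g b| <= `|g a - g b| by [].
rewrite ler_norml => /andP[h3 h4].
apply/andP; split; lra.
Qed.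

Lemma V_meas t : measurable_fun setT (EFin \o (fun x => V x t)).
Proof.
apply/measurable_EFinP; apply: ucont_meas => a e e0.
have [C C0 hC] := V_lip hsimp hM0 hM hpi t.
exists (e / (C + 1)); first by rewrite divr_gt0 // ltr_wpDl.
move=> b hb; apply: le_lt_trans (hC a b) _.
have C1 : 0 < C + 1 by rewrite ltr_wpDl.
apply: (@le_lt_trans _ _ ((C + 1) * ud a b)).
  by apply: ler_wpM2r; [exact: (udist_ge0 hsimp hpi) | lra].
by rewrite mulrC -ltr_pdivlMr.
Qed.


Lemma ball_meas a e : measurable [set b | ud a b < e].
Proof. exact/uopen_meas/ball_open. Qed.

Lemma ball_pos a (e : R) : 0 < e -> (0 < nu0 [set b | (ud a b < e)%R])%E.
Proof.
move=> e0; set B := [set b | ud a b < e].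
have mB : measurable B := ball_meas a e.
rewrite lt_def measure_ge0 andbT; apply/negP => /eqP B0.
have hC : nu0 (~` B) = 1%E by rewrite probability_setC // B0 sube0.
have hcl : uclosed pi (~` B) by rewrite /uclosed setCK; exact: ball_open.
have hT := hsupp hcl hC.
have : (~` B) a by rewrite hT.
by apply; rewrite /B /= (udist_xx hsimp hpi).
Qed.

Lemma P_inhabited : exists a : P, True.
Proof.
case: (pselect (exists a : P, True)) => // hne.
have hT : [set: P] = set0 by apply/seteqP; split => x // _; apply: hne; exists x.
have := probability_setT nu0; rewrite hT measure0 => /eqP.
by rewrite eq_sym eqe oner_eq0.
Qed.

Lemma K3 a (e : R) : 0 < e -> exists N, forall t, (N <= t)%N ->
  (0 < t)%N /\ t%:R * (W a - e) <= ln (V a t) <= t%:R * (W a + e).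
Proof.
move=> e0; have [N hN] := cvg_ev (@hW a) e0.
exists N.+1 => t Nt; have t0 : (0 < t)%N by apply: leq_trans Nt.
split => //; have := hN t (ltnW Nt).
have tR : (0 < t%:R :> R) by rewrite ltr0n.
set q := ln (V a t).
rewrite ltr_distlC => /andP[h1 h2].
have -> : q = t%:R * (q / t%:R) by rewrite mulrC divfK // gt_eqF.
by rewrite !ler_pM2l // !ltW.
Qed.

Lemma W_le a : W a <= ln M.
Proof.
rewrite leNgt; apply/negP => hlt.
have e0 : 0 < (W a - ln M) / 2 by rewrite divr_gt0 // subr_gt0.
have [N hN] := K3 a e0.
have [N0 /andP[h1 _]] := hN N (leqnn N).
have h2 : ln (V a N) <= N%:R * ln M := ln_relval_le hsimp hM0 hM N (hpi a).
have := le_trans h1 h2; rewrite ler_pM2l ?ltr0n //; lra.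
Qed.

Lemma W_has_sup : has_sup (range W).
Proof.
have [a _] := P_inhabited; split; first by exists (W a), a.
by exists (ln M) => _ [b _ <-]; exact: W_le.
Qed.

Lemma W_le_sup a : W a <= sup (range W).
Proof. by apply: sup_upper_bound W_has_sup _ _; exists a. Qed.

Lemma Wlip_half a b : W a <= W b + Lc n M * ud a b.
Proof.
apply/ler_addgt0Pr => e e0.
have e2 : 0 < e / 2 by rewrite divr_gt0.
have [Na hNa] := K3 a e2; have [Nb hNb] := K3 b e2.
have [t0 /andP[ha _]] := hNa (maxn Na Nb) (leq_maxl _ _).
have [_ /andP[_ hb]] := hNb (maxn Na Nb) (leq_maxr _ _).
set t := maxn Na Nb in t0 ha hb.
have hl := lnV_lip' a b t; rewrite ler_norml in hl; case/andP: hl => _ hl.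
have tR : (0 < t%:R :> R) by rewrite ltr0n.
have : t%:R * (W a - e / 2) <= t%:R * (W b + e / 2 + Lc n M * ud a b).
  clearbody t; nra.
rewrite ler_pM2l //; lra.
Qed.

Lemma Wlip a b : `|W a - W b| <= Lc n M * ud a b.
Proof.
rewrite ler_norml; have := Wlip_half a b; have := Wlip_half b a.
rewrite (udist_sym pi b a); move=> h1 h2; apply/andP; split; lra.
Qed.

Lemma small_del (e : R) : 0 < e -> exists2 del : R, 0 < del & Lc n M * del <= e.
Proof.
move=> e0; have L0 := Lc_ge0 n hM0.
exists (e / (Lc n M + 1)); first by rewrite divr_gt0 // ltr_wpDl.
have L1 : 0 < Lc n M + 1 by rewrite ltr_wpDl.
rewrite mulrA ler_pdivrMr //; nra.
Qed.

Lemma cover (F : set P) (w e : R) : 0 < e -> (forall a, F a -> W a <= w) ->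
  exists N, forall t, (N <= t)%N -> forall x, F x -> ln (V x t) <= t%:R * (w + e).
Proof.
move=> e0 hF.
have e3 : 0 < e / 3 by rewrite divr_gt0.
have [del del0 Ldel] := small_del e3.
have [s hs] := htb del0.
have [N hN] : exists N, forall b, List.In b s -> (exists c, F c /\ ud c b < del) ->
    exists c, [/\ F c, ud c b < del &
       forall t, (N <= t)%N -> ln (V c t) <= t%:R * (W c + e / 3)].
  elim: s {hs} => [|b s [N IH]]; first by exists 0%N => b [].
  case: (pselect (exists c, F c /\ ud c b < del)) => [[c [Fc hc]]|hnc].
    have [Nc hNc] := K3 c e3.
    exists (maxn N Nc) => b' /= [<-|hb'] hex.
      exists c; split => // t ht.
      by have [_ /andP[_ h]] := hNc t (leq_trans (leq_maxr _ _) ht).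
    have [c' [? ? h]] := IH b' hb' hex; exists c'; split => // t ht.
    exact: h t (leq_trans (leq_maxl _ _) ht).
  exists N => b' /= [<-|hb'] hex; first by exfalso.
  exact: IH.
exists N => t ht x Fx.
have [b hb hxb] := hs x.
have [c [Fc hcb hc]] := hN b hb (ex_intro _ x (conj Fx hxb)).
have h1 := lnV_lip' x b t; rewrite ler_norml in h1; case/andP: h1 => _ h1.
have h2 := lnV_lip' b c t; rewrite ler_norml in h2; case/andP: h2 => _ h2.
rewrite (udist_sym pi b c) in h2.
have h3 := hc t ht.
have hwc := hF c Fc.
have T0 : 0 <= t%:R :> R by [].
have L0 := Lc_ge0 n hM0.
have TL0 : 0 <= t%:R * Lc n M by rewrite mulr_ge0.
have k1 : t%:R * Lc n M * ud x b <= t%:R * (e / 3).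
  apply: (@le_trans _ _ (t%:R * Lc n M * del)); first by rewrite ler_wpM2l // ltW.
  by rewrite -mulrA ler_wpM2l.
have k2 : t%:R * Lc n M * ud c b <= t%:R * (e / 3).
  apply: (@le_trans _ _ (t%:R * Lc n M * del)); first by rewrite ler_wpM2l // ltW.
  by rewrite -mulrA ler_wpM2l.
have k3 : t%:R * (W c + e / 3) <= t%:R * (w + e / 3) by rewrite ler_wpM2l // lerD2r.
have k4 : t%:R * (w + e / 3) + t%:R * (e / 3) + t%:R * (e / 3) = t%:R * (w + e).
  by rewrite -!mulrDr; congr (_ * _); lra.
rewrite -k4; lra.
Qed.

Lemma efin_between (x : \bar R) (c : R) : (0 <= x)%E -> (x <= c%:E)%E -> x = (fine x)%:E.
Proof. by case: x. Qed.

Definition Z t (B : set P) := (\int[nu0]_(x in B) (V x t)%:E)%E.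

Lemma VmeasB t (B : set P) : measurable_fun B (fun x => (V x t)%:E).
Proof. apply: (measurable_funS measurableT) => //; exact: V_meas. Qed.

Lemma Z_ge0 t B : (0 <= Z t B)%E.
Proof. by apply: integral_ge0 => x _; rewrite lee_fin ltW // V_gt0. Qed.

Lemma Z_ge t B (c : R) : measurable B -> 0 <= c -> (forall x, B x -> c <= V x t) ->
  (c%:E * nu0 B <= Z t B)%E.
Proof.
move=> mB c0 hc; rewrite -(integral_cst nu0 mB); apply: ge0_le_integral => //.
exact: VmeasB.
Qed.

Lemma Z_le t B (c : R) : measurable B -> 0 <= c -> (forall x, B x -> V x t <= c) ->
  (Z t B <= c%:E)%E.
Proof.
move=> mB c0 hc; apply: (@le_trans _ _ (c%:E * nu0 B)%E).
  rewrite -(integral_cst nu0 mB); apply: ge0_le_integral => //.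
  - by move=> x _; rewrite lee_fin ltW // V_gt0.
  - exact: VmeasB.
rewrite -[leRHS]mule1; apply: lee_wpmul2l; first by rewrite lee_fin.
exact: probability_le1.
Qed.

Lemma Z_sub t B C : measurable B -> measurable C -> B `<=` C -> (Z t B <= Z t C)%E.
Proof.
move=> mB mC BC; apply: ge0_subset_integral => //; first exact: VmeasB.
by move=> x _; rewrite lee_fin ltW // V_gt0.
Qed.

Lemma Z_fin t B : measurable B -> Z t B = (fine (Z t B))%:E.
Proof.
move=> mB; apply: (@efin_between _ (M ^+ t)); first exact: Z_ge0.
apply: Z_le => //; first by rewrite exprn_ge0 // ltW.
move=> x _; exact: (relval_le hsimp hM0 hM (hpi x) t).
Qed.

Lemma eln_le (x : R) (t : nat) (r : R) : (0 < t)%N ->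
  (0 < x -> ln x <= t%:R * r) -> (eln x * (t%:R^-1)%:E <= r%:E)%E.
Proof.
move=> t0 h; rewrite /eln; case: ifP => hx.
  rewrite -EFinM lee_fin ler_pdivrMr ?ltr0n // mulrC; exact: h.
by rewrite mulNyr gtr0_sg ?invr_gt0 ?ltr0n // mul1e leNye.
Qed.

Lemma eln_ge (x : R) (t : nat) (r : R) : (0 < t)%N -> 0 < x ->
  t%:R * r <= ln x -> (r%:E <= eln x * (t%:R^-1)%:E)%E.
Proof.
move=> t0 hx h; rewrite /eln hx -EFinM lee_fin ler_pdivlMr ?ltr0n // mulrC.
exact: h.
Qed.

Lemma V_le_exp x t c : ln (V x t) <= c -> V x t <= expR c.
Proof. by move=> h; rewrite -[V x t]lnK ?posrE ?V_gt0 // ler_expR. Qed.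

Lemma V_ge_exp x t c : c <= ln (V x t) -> expR c <= V x t.
Proof. by move=> h; rewrite -[V x t]lnK ?posrE ?V_gt0 // ler_expR. Qed.

Lemma nu_fin (B : set P) : measurable B -> (0 < nu0 B)%E ->
  exists2 q : R, 0 < q & nu0 B = q%:E.
Proof.
move=> mB hB; have h1 := probability_le1 nu0 mB.
exists (fine (nu0 B)); last exact: (efin_between (ltW hB) h1).
by rewrite -lte_fin -(efin_between (ltW hB) h1).
Qed.

Lemma log_tail (q e : R) : 0 < e -> exists N, forall t, (N <= t)%N -> - ln q <= t%:R * e.
Proof.
move=> e0; exists (Num.bound (`|ln q| / e)) => t ht.
have h := archi_boundP (divr_ge0 (normr_ge0 (ln q)) (ltW e0)).
have : `|ln q| / e < t%:R by apply: lt_le_trans h _; rewrite ler_nat.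
rewrite ltr_pdivrMr // => h2.
apply: le_trans (ltW h2); rewrite -normrN; exact: ler_norm.
Qed.

Lemma ball_lower a (e del : R) Na : 0 < e -> Lc n M * del <= e ->
  (forall t, (Na <= t)%N -> (0 < t)%N /\ t%:R * (W a - e) <= ln (V a t) <= t%:R * (W a + e)) ->
  forall t x, (Na <= t)%N -> ud a x < del -> t%:R * (W a - 2 * e) <= ln (V x t).
Proof.
move=> e0 Ldel hNa t x ht hx.
have [_ /andP[ha _]] := hNa t ht.
have h1 := lnV_lip' a x t; rewrite ler_norml in h1; case/andP: h1 => _ h1.
have T0 : 0 <= t%:R :> R by [].
have L0 := Lc_ge0 n hM0.
have k1 : t%:R * Lc n M * ud a x <= t%:R * e.
  apply: (@le_trans _ _ (t%:R * Lc n M * del)).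
    by rewrite ler_wpM2l ?mulr_ge0 // ltW.
  by rewrite -mulrA ler_wpM2l.
have k2 : t%:R * (W a - 2 * e) = t%:R * (W a - e) - t%:R * e by ring.
rewrite k2; lra.
Qed.

Lemma upper (F : set P) (r r' : R) : measurable F -> r' < r ->
  (forall a, F a -> W a - sup (range W) <= r') ->
  exists N, forall t, (N <= t)%N ->
    (eln (wealth_dist mu pi nu0 t F) * (t%:R^-1)%:E <= r%:E)%E.
Proof.
move=> mF rr' hF; set Ws := sup (range W).
have e0 : 0 < (r - r') / 5 by rewrite divr_gt0 // subr_gt0.
set e := (r - r') / 5 in e0.
have hF' : forall a, F a -> W a <= Ws + r'.
  by move=> a Fa; have := hF a Fa; rewrite -/Ws; lra.
have [N1 hN1] := cover e0 hF'.
have [_ [a0 _ <-] ha0] := sup_adherent e0 W_has_sup.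
have [del del0 Ldel] := small_del e0.
set B := [set b | ud a0 b < del].
have mB : measurable B := ball_meas a0 del.
have [q q0 hq] := nu_fin mB (ball_pos a0 del0).
have [N2 hN2] := K3 a0 e0.
have [N3 hN3] := log_tail q e0.
exists (maxn (maxn N1 N2) N3) => t ht.
have tN1 : (N1 <= t)%N by apply: leq_trans ht; rewrite leq_max leq_max leqnn.
have tN2 : (N2 <= t)%N by apply: leq_trans ht; rewrite leq_max leq_max leqnn orbT.
have tN3 : (N3 <= t)%N by apply: leq_trans ht; rewrite leq_max leqnn orbT.
have [t0 _] := hN2 t tN2.
apply: eln_le => // hpos.
have T0 : 0 <= t%:R :> R by [].
set c1 := t%:R * (Ws - 3 * e).
have hB : forall x, B x -> expR c1 <= V x t.
  move=> x Bx; apply: V_ge_exp.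
  have := ball_lower e0 Ldel hN2 tN2 Bx.
  have : t%:R * (Ws - 3 * e) <= t%:R * (W a0 - 2 * e).
    by rewrite ler_wpM2l //; rewrite /Ws; lra.
  rewrite /c1; lra.
have zB := Z_ge mB (ltW (expR_gt0 c1)) hB.
have zBT := Z_sub t mB measurableT (@subsetT _ B).
rewrite hq (Z_fin t mB) (Z_fin t measurableT) -EFinM !lee_fin in zB zBT.
have zT0 : expR c1 * q <= fine (Z t setT) by apply: le_trans zB zBT.
have zTp : 0 < fine (Z t setT) by apply: lt_le_trans zT0; rewrite mulr_gt0 // expR_gt0.
set c2 := t%:R * (Ws + r' + e).
have hFb : forall x, F x -> V x t <= expR c2.
  by move=> x Fx; apply: V_le_exp; rewrite /c2; apply: hN1.
have zF := Z_le mF (ltW (expR_gt0 c2)) hFb.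
rewrite (Z_fin t mF) lee_fin in zF.
rewrite /wealth_dist -/(Z t F) -/(Z t setT) in hpos |- *.
have zFp : 0 < fine (Z t F).
  by move: hpos; rewrite pmulr_lgt0 // invr_gt0.
rewrite ln_div ?posrE //.
have l1 : ln (fine (Z t F)) <= c2 by rewrite -[c2]expRK ler_ln ?posrE ?expR_gt0.
have l2 : c1 + ln q <= ln (fine (Z t setT)).
  by rewrite -[c1]expRK -lnM ?posrE ?expR_gt0 // ler_ln ?posrE ?mulr_gt0 ?expR_gt0.
have l3 := hN3 t tN3.
have k : c2 - c1 + t%:R * e = t%:R * r by rewrite /c1 /c2 /e; field.
lra.
Qed.

Lemma lower (G : set P) (r : R) a : uopen pi G -> G a -> r < W a - sup (range W) ->
  exists N, forall t, (N <= t)%N ->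
    (r%:E <= eln (wealth_dist mu pi nu0 t G) * (t%:R^-1)%:E)%E.
Proof.
move=> hG Ga hr; set Ws := sup (range W).
have e0 : 0 < (W a - Ws - r) / 5 by rewrite divr_gt0 // subr_gt0.
set e := (W a - Ws - r) / 5 in e0.
have [e' e'0 he'] := hG a Ga.
have [del1 del10 Ldel1] := small_del e0.
set del := Num.min e' del1.
have del0 : 0 < del by rewrite lt_min e'0 del10.
have Ldel : Lc n M * del <= e.
  apply: le_trans Ldel1; rewrite ler_wpM2l ?Lc_ge0 //; by rewrite ge_min lexx orbT.
set B := [set b | ud a b < del].
have BG : B `<=` G.
  move=> b Bb; apply: he'; apply: lt_le_trans Bb _; by rewrite ge_min lexx.
have mB : measurable B := ball_meas a del.
have mG : measurable G := uopen_meas hG.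
have [q q0 hq] := nu_fin mB (ball_pos a del0).
have hT : forall b, [set: P] b -> W b <= Ws by move=> b _; exact: W_le_sup.
have [N1 hN1] := cover e0 hT.
have [N2 hN2] := K3 a e0.
have [N3 hN3] := log_tail q e0.
exists (maxn (maxn N1 N2) N3) => t ht.
have tN1 : (N1 <= t)%N by apply: leq_trans ht; rewrite leq_max leq_max leqnn.
have tN2 : (N2 <= t)%N by apply: leq_trans ht; rewrite leq_max leq_max leqnn orbT.
have tN3 : (N3 <= t)%N by apply: leq_trans ht; rewrite leq_max leqnn orbT.
have [t0 _] := hN2 t tN2.
have T0 : 0 <= t%:R :> R by [].
set c1 := t%:R * (W a - 2 * e).
have hB : forall x, B x -> expR c1 <= V x t.
  by move=> x Bx; apply: V_ge_exp; exact: (ball_lower e0 Ldel hN2 tN2 Bx).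
have zB := Z_ge mB (ltW (expR_gt0 c1)) hB.
have zBG := Z_sub t mB mG BG.
have zGT := Z_sub t mG measurableT (@subsetT _ G).
rewrite hq (Z_fin t mB) (Z_fin t mG) -EFinM !lee_fin in zB zBG.
rewrite (Z_fin t mG) (Z_fin t measurableT) lee_fin in zGT.
have zG0 : expR c1 * q <= fine (Z t G) by apply: le_trans zB zBG.
have zGp : 0 < fine (Z t G) by apply: lt_le_trans zG0; rewrite mulr_gt0 // expR_gt0.
have zTp : 0 < fine (Z t setT) by apply: lt_le_trans zGT.
set c2 := t%:R * (Ws + e).
have hTb : forall x, [set: P] x -> V x t <= expR c2.
  by move=> x _; apply: V_le_exp; rewrite /c2; apply: hN1.
have zT := Z_le measurableT (ltW (expR_gt0 c2)) hTb.
rewrite (Z_fin t measurableT) lee_fin in zT.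
rewrite /wealth_dist -/(Z t G) -/(Z t setT).
apply: eln_ge => //; first by rewrite divr_gt0.
rewrite ln_div ?posrE //.
have l1 : ln (fine (Z t setT)) <= c2 by rewrite -[c2]expRK ler_ln ?posrE ?expR_gt0.
have l2 : c1 + ln q <= ln (fine (Z t G)).
  by rewrite -[c1]expRK -lnM ?posrE ?expR_gt0 // ler_ln ?posrE ?mulr_gt0 ?expR_gt0.
have l3 := hN3 t tN3.
have k : c1 - c2 - t%:R * e = t%:R * r + t%:R * e.
  by rewrite /c1 /c2 /e; field.
have k2 : 0 <= t%:R * e by rewrite mulr_ge0 // ltW.
lra.
Qed.

Lemma ldp_main : LDP pi (wealth_dist mu pi nu0) (fun a => sup (range W) - W a).
Proof.
set Ws := sup (range W).
split; [|split].
- move=> a c hc.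
  have e0 : 0 < (Ws - W a - c) / 2 by rewrite divr_gt0 // subr_gt0.
  have [del del0 Ldel] := small_del e0.
  exists del => // b hb.
  have h := Wlip a b; rewrite ler_norml in h; case/andP: h => h _.
  have k : Lc n M * ud a b <= Lc n M * del by rewrite ler_wpM2l ?Lc_ge0 // ltW.
  lra.
- move=> F hF; have mF := uclosed_meas hF.
  apply: le_by_reals => r hr.
  rewrite lteNl -EFinN in hr.
  have [q qr hq] := gap_lt hr.
  have hF' : forall a, F a -> W a - Ws <= - q.
    move=> a Fa; have : (q%:E <= (Ws - W a)%:E)%E.
      by apply: le_trans hq _; apply: ereal_inf_lbound; exists a.
    rewrite lee_fin; lra.
  have qr' : - q < r by rewrite ltrNl.
  have [N hN] := upper mF qr' hF'.
  by apply: esup_le_ev; exists N.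
- move=> G hG; apply: ge_by_reals => r hr.
  rewrite lteNr -EFinN in hr.
  have [_ [a Ga <-] ha] := ereal_inf_lt hr.
  rewrite lte_fin in ha.
  have ra : r < W a - Ws by move: ha; rewrite ltrNr opprB.
  have [N hN] := lower hG Ga ra.
  by apply: einf_ge_ev; exists N.
Qed.

End Main.

Unset Implicit Arguments.

Theorem theorem1p1 (R : realType) (n : nat) (hn : (2 <= n)%N)
  (mu : nat -> 'I_n -> R) (hmu : is_market mu)
  (d : measure_display) (P : measurableType d)
  (pi : P -> ('I_n -> R) -> ('I_n -> R))
  (hpi : forall a, portfolio_map (pi a))
  (hinj : forall a b, (forall p, open_simplex p -> pi a p = pi b p) -> a = b)
  (htb : utotally_bounded pi)
  (hborel : @measurable d P = <<s uopen pi >>)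
  (nu0 : probability P R) (hsupp : full_support pi nu0)
  (W : P -> R)
  (hW : forall a, (fun t : nat => ln (relval mu (pi a) t) / t%:R) @ \oo --> W a) :
  LDP pi (wealth_dist mu pi nu0)
      (fun a => sup (range W) - W a).
Proof.
case: hmu => hsimp [M [hM0 hM]].
exact: (@ldp_main R n mu M hsimp hM0 hM d P pi hpi htb hborel nu0 hsupp W hW).
Qed.
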